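(* Let $(A,B)$ be a random vector, $(A_n,B_n)_{n\in\mathbb N}$ i.i.d. copies, $X=\sum_{k\ge1}\Pi_{k-1}B_k$ with $|X|<\infty$ a.s. Assume $\mathbb P\{A=0\}=0$, $\mathbb P\{B=0\}<1$, $\mathbb P\{B+Ac=c\}<1$ for all $c\in\mathbb R$, and $\mathbb P\{A\in(0,1]\}=1$. If $\mathbb E e^{rX}<\infty$ for some $r>0$, then $\mathbb E e^{rB}\mathbf 1_{\{A=1\}}<1$ (regardless of whether the support of the distribution of $X$ is bounded from the right).
   Context: $\Pi_0:=1$, $\Pi_n:=A_1\cdots A_n$. *)

(* Defs.v *)
From HB Require Import structures.
From mathcomp Require Import all_boot all_order all_algebra.
From mathcomp Require Import all_classical all_reals all_analysis.
Set Implicit Arguments. Unset Strict Implicit. Unset Printing Implicit Defensive.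
Import Order.TTheory GRing.Theory Num.Theory.
Import numFieldNormedType.Exports.
Local Open Scope classical_set_scope.
Local Open Scope ring_scope.

Definition mutually_independent {d} {T : measurableType d} {R : realType}
  (P : probability T R) (V : nat -> T -> R * R) : Prop :=
  forall (I : seq nat) (S : nat -> set (R * R)), uniq I ->
    (forall i, i \in I -> measurable (S i)) ->
    P (\bigcap_(i in [set` I]) (V i @^-1` S i)) =
    (\prod_(i <- I) P (V i @^-1` S i))%E.

Definition same_law {d} {T : measurableType d} {R : realType}
  (P : probability T R) (V W : T -> R * R) : Prop :=
  forall S : set (R * R), measurable S -> P (V @^-1` S) = P (W @^-1` S).

Definition Pi {T} {R : realType} (A : nat -> T -> R) (n : nat) (t : T) : R :=
  \prod_(1 <= i < n.+1) A i t.

(* The k-th term (k >= 1) Pi_{k-1} B_k, indexed from 0: term k = Pi_k B_{k+1}. *)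
Definition Xterm {T} {R : realType} (A B : nat -> T -> R) (t : T) (k : nat) : R :=
  Pi A k t * B k.+1 t.

Definition Xsum {T} {R : realType} (A B : nat -> T -> R) (t : T) : R :=
  limn (series (Xterm A B t)).

(* Main.v *)
Require Import Defs.
From HB Require Import structures.
From mathcomp Require Import all_boot all_order all_algebra.
From mathcomp Require Import all_classical all_reals all_analysis.
From mathcomp Require Import measurable_realfun.
Set Implicit Arguments. Unset Strict Implicit. Unset Printing Implicit Defensive.
Import Order.TTheory GRing.Theory Num.Theory.
Import numFieldNormedType.Exports.
Local Open Scope classical_set_scope.
Local Open Scope ring_scope.

Lemma cvgn_cauchyE (R : realType) (u : nat -> R) : cvgn u <->
  forall k : nat, exists N, forall n, (N <= n)%N -> `|u N - u n| < k.+1%:R^-1.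
Proof.
split.
- move=> /cvg_ex[l ul] k.
  have e0 : 0 < k.+1%:R^-1 / 2 :> R by rewrite divr_gt0 // invr_gt0.
  move/cvgrPdist_lt : ul => /(_ _ e0) -[N _ Nu].
  exists N => n Nn.
  rewrite (le_lt_trans (ler_distD l _ _)) //.
  rewrite [X in _ < X](splitr (k.+1%:R^-1)) ltrD //.
    by rewrite distrC; apply: Nu => /=.
  by apply: Nu.
- move=> H; apply/cauchy_cvgP; apply/cauchy_exP => e e0.
  have [k ke] : exists k : nat, k.+1%:R^-1 < e.
    by have [k] := ltr_add_invr e0; rewrite add0r; exists k.
  have [N HN] := H k.
  exists (u N); exists N => // n Nn /=.
  rewrite -ball_normE /ball_ /=.
  exact: lt_trans (HN n Nn) ke.
Qed.

Lemma measurable_limn d (T : measurableType d) (R : realType) (u : nat -> T -> R) :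
  (forall n, measurable_fun setT (u n)) -> measurable_fun setT (fun t => limn (u ^~ t)).
Proof.
move=> mu.
set C := [set t | cvgn (u ^~ t)].
have mC : measurable C.
  have -> : C = \bigcap_k \bigcup_N \bigcap_n
      [set t | (N <= n)%N -> `|u N t - u n t| < k.+1%:R^-1].
    apply/seteqP; split => t.
    - move=> /cvgn_cauchyE H k _; have [N HN] := H k.
      by exists N => // n _; exact: HN.
    - move=> H; apply/cvgn_cauchyE => k; have [N _ HN] := H k I.
      by exists N => n Nn; exact: HN n I Nn.
  apply: bigcapT_measurable => k; apply: bigcupT_measurable => N.
  apply: bigcapT_measurable => n.
  have [Nn|Nn] := leqP N n.
    have mf : measurable_fun setT (fun t => `|u N t - u n t|).
      by apply: measurableT_comp => //; apply: measurable_funB.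
    rewrite (_ : [set t | _] = (fun t => `|u N t - u n t|) @^-1` `]-oo, k.+1%:R^-1[).
      by rewrite -[X in measurable X]setTI; apply: mf => //; exact: measurable_itv.
    apply/seteqP; split => t /=.
      by move=> /(_ isT); rewrite in_itv.
    by rewrite in_itv => + _.
  rewrite (_ : [set t | _] = setT) //.
  by apply/seteqP; split => // t _ /=.
rewrite -(setUv C); apply/measurable_funU => //; first exact: measurableC.
split.
  apply: (measurable_fun_cvg (h := u)).
    by move=> m; apply: measurable_funS (mu m).
  by move=> x Cx.
apply: (@eq_measurable_fun _ _ _ _ _ (fun=> (0:R))); last exact: measurable_cst.
move=> t; rewrite inE /= => Ct.
rewrite /lim /lim_in getPN //= => l ul; apply: Ct.
by apply/cvg_ex; exists l.
Qed.

Lemma integral_gt0 d (T : measurableType d) (R : realType)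
  (m : {measure set T -> \bar R}) (D : set T) (f : T -> \bar R) :
  measurable D -> measurable_fun D f -> (forall x, D x -> (0 < f x)%E) ->
  (0 < m D)%E -> (0 < \int[m]_(x in D) f x)%E.
Proof.
move=> mD mf fgt0 mD0.
rewrite lt_neqAle integral_ge0 ?andbT; last by move=> x Dx; exact/ltW/fgt0.
apply/negP => /eqP H.
have : (\int[m]_(x in D) `|f x| = 0)%E.
  rewrite [RHS]H; apply: eq_integral => x; rewrite inE => Dx.
  by rewrite gee0_abs //; exact/ltW/fgt0.
move/(ae_eq_integral_abs m mD mf) => [N [mN N0 DN]].
have : D `<=` N.
  move=> x Dx; apply: DN => /= /(_ Dx) fx0.
  by have := fgt0 x Dx; rewrite fx0 ltxx.
move=> DN'; have := subset_measure0 mD mN DN' N0.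
by move=> D0; move: mD0; rewrite D0 ltxx.
Qed.

Section Om.
Context (R : realType).
Definition cyl (n : nat) (S : nat -> set (R * R)) : set (nat -> R * R) :=
  [set w | forall i, (i < n)%N -> S i (w i)].
Definition Gcyl : set (set (nat -> R * R)) :=
  [set C | exists n S, (forall i, measurable (S i)) /\ C = cyl n S].
Definition Om := g_sigma_algebraType Gcyl.

Lemma Gcyl_setI : setI_closed Gcyl.
Proof.
move=> _ _ [n1 [S1 [mS1 ->]]] [n2 [S2 [mS2 ->]]].
exists (maxn n1 n2), (fun i => (if (i < n1)%N then S1 i else setT) `&`
                             (if (i < n2)%N then S2 i else setT)); split.
  by move=> i; apply: measurableI; case: ifP.
apply/seteqP; split => w /=.
  move=> [H1 H2] i _; split.
    by case: ifP => // /H1.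
  by case: ifP => // /H2.
move=> H; split => i ilt.
  have : (i < maxn n1 n2)%N by rewrite leq_max ilt.
  by move=> /H [+ _]; rewrite ilt.
have : (i < maxn n1 n2)%N by rewrite leq_max ilt orbT.
by move=> /H [_]; rewrite ilt.
Qed.

Lemma cyl0 S : cyl 0 S = setT.
Proof. by apply/seteqP; split => // w _ i. Qed.

Lemma Gcyl_setT : Gcyl setT.
Proof. by exists 0%N, (fun=> setT); split => //; rewrite cyl0. Qed.

Lemma measurable_Om : (measurable : set (set Om)) = <<s Gcyl >>.
Proof. by []. Qed.

Lemma Gcyl_measurable C : Gcyl C -> measurable (C : set Om).
Proof. by move=> GC; apply: sub_sigma_algebra. Qed.

Lemma measurable_coord i : measurable_fun setT (fun w : Om => w i).
Proof.
move=> _ Y mY; rewrite setTI.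
apply: Gcyl_measurable; exists i.+1, (fun j => if j == i then Y else setT).
split; first by move=> j; case: ifP.
apply/seteqP; split => w /=.
  by move=> Yw j _; case: eqP => // ->.
by move=> /(_ i (ltnSn i)); rewrite eqxx.
Qed.


Definition hterm (w : nat -> R * R) k := (\prod_(i < k) (w i).1) * (w k).2.
Definition Hs (w : nat -> R * R) : R := limn (series (hterm w)).
Definition tl (w : nat -> R * R) : nat -> R * R := fun i => w i.+1.

Lemma mHs : measurable_fun setT (Hs : Om -> R).
Proof.
apply: measurable_limn => n; rewrite /series /=.
apply: measurable_sum => k; apply: measurable_funM.
  apply: measurable_prod => i _.
  exact: measurableT_comp measurable_fst (measurable_coord i).
exact: measurableT_comp measurable_snd (measurable_coord k).
Qed.

Lemma hterm_tl w k : hterm w k.+1 = (w 0%N).1 * hterm (tl w) k.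
Proof. by rewrite /hterm big_ord_recl mulrA. Qed.

Lemma series_tl w n :
  series (hterm w) n.+1 = (w 0%N).2 + (w 0%N).1 * series (hterm (tl w)) n.
Proof.
rewrite /series /= big_nat_recl //; congr (_ + _).
  by rewrite /hterm big_ord0 mul1r.
by rewrite mulr_sumr; apply: eq_bigr => k _; rewrite hterm_tl.
Qed.

Lemma Hs_dec w : cvgn (series (hterm w)) ->
  Hs w = (w 0%N).2 + (w 0%N).1 * Hs (tl w).
Proof.
move=> cw.
have cwS : [sequence series (hterm w) n.+1]_n @ \oo --> Hs w by rewrite cvg_shiftS.
have [a0|a0] := eqVneq (w 0%N).1 0.
  rewrite a0 mul0r addr0.
  move: cwS; under eq_fun do rewrite series_tl a0 mul0r addr0.
  by move=> /cvg_lim => <- //; rewrite lim_cst.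
have ct : series (hterm (tl w)) @ \oo --> (w 0%N).1^-1 * (Hs w - (w 0%N).2).
  rewrite (_ : series (hterm (tl w)) = fun n => (w 0%N).1^-1 *
      ([sequence series (hterm w) n.+1]_n n - (w 0%N).2)).
    exact: (cvgM (cvg_cst _) (cvgB cwS (cvg_cst _))).
  apply/funext => n /=.
  by rewrite series_tl addrAC subrr add0r mulrA mulVf // mul1r.
rewrite /Hs (cvg_lim _ ct) // mulrA divff // mul1r.
by rewrite addrC subrK.
Qed.

End Om.

Section Main.
Context d (T : measurableType d) (R : realType) (P : probability T R)
  (A B : T -> R) (An Bn : nat -> T -> R).
Hypotheses (mA : measurable_fun setT A) (mB : measurable_fun setT B)
  (mAn : forall n, measurable_fun setT (An n))
  (mBn : forall n, measurable_fun setT (Bn n))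
  (indep : mutually_independent P (fun n t => (An n t, Bn n t)))
  (law : forall n, same_law P (fun t => (An n t, Bn n t)) (fun t => (A t, B t))).

Let V n t := (An n t, Bn n t).
Let V0 t := (A t, B t).

Lemma mV n : measurable_fun setT (V n).
Proof. exact: measurable_fun_pair. Qed.

Lemma mV0 : measurable_fun setT V0.
Proof. exact: measurable_fun_pair. Qed.

Definition pV (S : set (R * R)) := P (V0 @^-1` S).

Definition Phi k : T -> Om R := fun t i => V (k + i) t.

Lemma Phi_cyl k n S : Phi k @^-1` cyl n S =
  \bigcap_i (if (i < n)%N then V (k + i) @^-1` S i else setT).
Proof.
apply/seteqP; split => t /=.
  by move=> H i _; case: ifP => // /H.
by move=> H i ilt; have := H i I; rewrite ilt.
Qed.

Lemma mPhi k : measurable_fun setT (Phi k).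
Proof.
apply: (@measurability _ _ T (Om R) setT (Phi k) (@Gcyl R) (@measurable_Om R)).
move=> _ [_ [n [S [mS ->]]] <-]; rewrite setTI Phi_cyl.
apply: bigcapT_measurable => i; case: ifP => // _.
by rewrite -[X in measurable X]setTI; apply: mV.
Qed.

Lemma prod_iota k n (F : nat -> set (R * R)) : (forall i, measurable (F i)) ->
  (\prod_(i <- iota k n) P (V i @^-1` F (i - k)%N) = \prod_(i < n) pV (F i))%E.
Proof.
move=> mF.
rewrite -[k]addn0 iotaDl big_map.
have -> : iota 0 n = index_iota 0 n by rewrite /index_iota subn0.
rewrite big_mkord; apply: eq_bigr => i _.
by rewrite addn0 addKn; apply: law.
Qed.

Lemma indep_prod j k n S0 S : (j < k)%N -> measurable S0 ->
  (forall i, measurable (S i)) ->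
  P (V j @^-1` S0 `&` Phi k @^-1` cyl n S) = (pV S0 * \prod_(i < n) pV (S i))%E.
Proof.
move=> jk mS0 mS.
pose S' := fun i => if i == j then S0 else S (i - k)%N.
have uI : uniq (j :: iota k n).
  rewrite /= iota_uniq andbT mem_iota negb_and -ltnNge jk //.
have := indep (S := S') uI.
rewrite (_ : \bigcap_(i in [set` j :: iota k n]) _ = V j @^-1` S0 `&` Phi k @^-1` cyl n S).
  move=> ->; last by move=> i _; rewrite /S'; case: eqP.
  rewrite big_cons /S' eqxx (law j mS0); congr (_ * _)%E.
  rewrite -(prod_iota k n mS) big_seq [RHS]big_seq; apply: eq_bigr => i.
  rewrite mem_iota => /andP[ki _].
  by rewrite ifN // neq_ltn (leq_trans jk ki) orbT.
apply/seteqP; split => t /=.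
- move=> H; split.
    by have := H j; rewrite /S' eqxx; apply; rewrite /= inE eqxx.
  move=> i ilt; have := H (k + i)%N; rewrite /S'.
  rewrite (_ : (k + i == j) = false); last first.
    by apply/negbTE; rewrite neq_ltn (leq_trans jk (leq_addr _ _)) orbT.
  by rewrite addKn; apply; rewrite /= inE mem_iota leq_addr ltn_add2l ilt orbT.
- move=> [H0 H] i. rewrite /= inE => /orP[/eqP ->|]; first by rewrite /S' eqxx.
  rewrite mem_iota => /andP[ki ikn].
  rewrite /S' (_ : (i == j) = false); last first.
    by apply/negbTE; rewrite neq_ltn (leq_trans jk ki) orbT.
  have := H (i - k)%N; rewrite /Phi /= subnKC //; apply.
  by rewrite ltn_subLR.
Qed.


Lemma mPhi_in k : Phi k \in mfun.
Proof. by rewrite inE; exact: mPhi. Qed.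

Local Notation mu k := (distribution P (mfun_Sub (mPhi_in k))).

Lemma muE k X : mu k X = P (Phi k @^-1` X).
Proof. by []. Qed.

Lemma pVT : pV setT = 1%E.
Proof. by rewrite /pV preimage_setT probability_setT. Qed.

Lemma mu_cyl k n S : (0 < k)%N -> (forall i, measurable (S i)) ->
  mu k (cyl n S) = (\prod_(i < n) pV (S i))%E.
Proof.
move=> k0 mS; rewrite muE -[X in P X]setTI -(preimage_setT (V 0)).
by rewrite indep_prod // pVT mul1e.
Qed.

Lemma muT_lt k : (mu k [set: Om R] < +oo)%E.
Proof. by rewrite probability_setT ltry. Qed.

Lemma mu12 X : measurable X -> mu 1 X = mu 2 X.
Proof.
move=> mX; apply: (@measure_unique _ R (Om R) (@Gcyl R) (fun=> setT) (@measurable_Om R) (@Gcyl_setI R) (fun=> @Gcyl_setT R) _ (mu 1) (mu 2)) => //.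
- by rewrite bigcup_const.
- move=> _ [n [S [mS ->]]]; exact: (etrans (@mu_cyl 1 n S isT mS) (esym (@mu_cyl 2 n S isT mS))).
- by move=> _; exact: muT_lt.
Qed.


Section tail.
Variable S : set (R * R).
Hypothesis mS : measurable S.

Let W := V 1 @^-1` S.
Let mW : measurable W.
Proof. by rewrite -[W]setTI; apply: mV. Qed.

Definition nuS (X : set (Om R)) := P (W `&` Phi 2 @^-1` X).

Let nu0 : nuS set0 = 0%E.
Proof. by rewrite /nuS preimage_set0 setI0 measure0. Qed.

Let nu_ge0 X : (0 <= nuS X)%E.
Proof. exact: measure_ge0. Qed.

Let mPhi2 X : measurable X -> measurable (Phi 2 @^-1` X).
Proof. by move=> mX; rewrite -[X in measurable X]setTI; apply: mPhi. Qed.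

Let nu_sigma : semi_sigma_additive nuS.
Proof.
move=> F mF tF mUF; rewrite /nuS preimage_bigcup setI_bigcupr.
apply: measure_semi_sigma_additive.
- by move=> n; apply: measurableI => //; apply: mPhi2.
- apply/trivIsetP => i j _ _ ij; rewrite setIACA setIid -preimage_setI.
  by move/trivIsetP : tF => /(_ _ _ _ _ ij) ->//; rewrite preimage_set0 setI0.
- by rewrite -setI_bigcupr -preimage_bigcup; apply: measurableI => //; apply: mPhi2.
Qed.

HB.instance Definition _ := isMeasure.Build _ _ _ nuS nu0 nu_ge0 nu_sigma.

Let cS : {nonneg R} := NngNum (fine_ge0 (measure_ge0 P (V0 @^-1` S))).

Let pV_fin : pV S \is a fin_num.
Proof.
rewrite ge0_fin_numE; last exact: measure_ge0.
apply: (le_lt_trans (probability_le1 _ _)); last exact: ltry.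
by rewrite -[X in measurable X]setTI; apply: mV0.
Qed.

Definition nu2 (X : set (Om R)) := (pV S * mu 2 X)%E.

Let nu2E X : nu2 X = mscale cS (mu 2) X.
Proof. by rewrite /nu2 /mscale /cS /= fineK. Qed.

Let nu20 : nu2 set0 = 0%E.
Proof. by rewrite nu2E measure0. Qed.

Let nu2_ge0 X : (0 <= nu2 X)%E.
Proof. by rewrite nu2E measure_ge0. Qed.

Let nu2_sigma : semi_sigma_additive nu2.
Proof.
move=> F mF tF mUF; rewrite nu2E.
under eq_fun do under eq_bigr do rewrite nu2E.
exact: measure_semi_sigma_additive.
Qed.

HB.instance Definition _ := isMeasure.Build _ _ _ nu2 nu20 nu2_ge0 nu2_sigma.

Lemma indep_tail X : measurable X ->
  P (V 1 @^-1` S `&` Phi 2 @^-1` X) = (pV S * mu 2 X)%E.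
Proof.
move=> mX.
have : nuS X = nu2 X.
  apply: (@measure_unique _ R (Om R) (@Gcyl R) (fun=> setT) (@measurable_Om R) (@Gcyl_setI R) (fun=> @Gcyl_setT R) _ nuS nu2) => //.
  - by rewrite bigcup_const.
  - move=> _ [n [Sc [mSc ->]]]; rewrite /= /nuS /nu2.
    by rewrite indep_prod // (@mu_cyl 2 n Sc isT mSc).
  - move=> _; apply: (le_lt_trans (probability_le1 _ _)); last exact: ltry.
    by apply: measurableI => //; apply: mPhi2.
by [].
Qed.

End tail.

Lemma mJ : measurable_fun setT (fun t => (V 1 t, Phi 2 t)).
Proof. exact: measurable_fun_pair (mV 1) (mPhi 2). Qed.

Lemma mJ_in : (fun t => (V 1 t, Phi 2 t)) \in mfun.
Proof. by rewrite inE; exact: mJ. Qed.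

Lemma mV0_in : V0 \in mfun.
Proof. by rewrite inE; exact: mV0. Qed.

Local Notation muJ := (distribution P (mfun_Sub mJ_in)).
Local Notation pVm := (distribution P (mfun_Sub mV0_in)).

Lemma joint_eq Y : measurable Y -> ((pVm \x mu 2) Y = muJ Y)%E.
Proof.
apply: product_measure_unique => S X mS mX.
exact: (indep_tail mS mX).
Qed.


Lemma X_Hs t : Xsum An Bn t = Hs (Phi 1 t).
Proof.
rewrite /Xsum /Hs; congr (limn (series _)); apply/funext => k.
by rewrite /Xterm /Pi /hterm big_add1 /= big_mkord.
Qed.

Lemma dec t : cvgn (series (Xterm An Bn t)) ->
  Hs (Phi 1 t) = Bn 1 t + An 1 t * Hs (Phi 2 t).
Proof.
move=> cv; have cv' : cvgn (series (hterm (Phi 1 t))).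
  by move: cv; congr (cvgn (series _)); apply/funext => k;
     rewrite /Xterm /Pi /hterm big_add1 /= big_mkord.
exact: (Hs_dec cv').
Qed.

Variable r : R.

Definition G (z : (R * R) * Om R) : \bar R :=
  (expR (r * (z.1.2 + z.1.1 * Hs z.2)))%:E.

Lemma mG : measurable_fun setT G.
Proof.
apply/measurable_EFinP; apply: measurableT_comp => //.
apply: measurable_funM => //; apply: measurable_funD.
  exact: measurableT_comp measurable_snd measurable_fst.
apply: measurable_funM.
  exact: measurableT_comp measurable_fst measurable_fst.
exact: measurableT_comp (@mHs R) measurable_snd.
Qed.

Lemma G_gt0 z : (0 < G z)%E.
Proof. by rewrite lte_fin expR_gt0. Qed.

Lemma mX : measurable_fun setT (fun t => Xsum An Bn t).
Proof.
rewrite (_ : (fun t => _) = (@Hs R) \o Phi 1); last by apply/funext => t; rewrite X_Hs.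
exact: measurableT_comp (@mHs R) (mPhi 1).
Qed.

Definition phi := (\int[P]_t (expR (r * Xsum An Bn t))%:E)%E.

Lemma step1 : {ae P, forall t, cvgn (series (Xterm An Bn t))} ->
  phi = (\int[P]_t G (V 1 t, Phi 2 t))%E.
Proof.
move=> cvae; apply: ae_eq_integral => //.
- apply/measurable_EFinP; apply: measurableT_comp => //.
  by apply: measurable_funM => //; exact: mX.
- exact: measurableT_comp mG mJ.
- apply: filterS cvae => t cv _.
  by rewrite /G /= X_Hs dec.
Qed.


Lemma G_ge0 z : (0 <= G z)%E.
Proof. exact/ltW/G_gt0. Qed.

Lemma step2 : (\int[P]_t G (V 1 t, Phi 2 t) = \int[muJ]_z G z)%E.
Proof. by rewrite (@ge0_integral_distribution _ _ _ _ _ P (mfun_Sub mJ_in) G mG (fun z => G_ge0 z)). Qed.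

Lemma step3 : (\int[muJ]_z G z = \int[pVm \x mu 2]_z G z)%E.
Proof. apply: (eq_measure_integral (pVm \x mu 2)%E) => Y mY _. exact/esym/(joint_eq mY). Qed.

Definition Fv (v : R * R) := (\int[mu 2]_w G (v, w))%E.

Lemma step4 : (\int[pVm \x mu 2]_z G z = \int[pVm]_v Fv v)%E.
Proof. exact: (fubini_tonelli1 G mG G_ge0). Qed.

Lemma mFv : measurable_fun setT Fv.
Proof. exact: (measurable_fun_fubini_tonelli_F G mG G_ge0). Qed.


Definition E1 : set (R * R) := [set v | v.1 = 1].

Lemma mE1 : measurable E1.
Proof.
have : measurable (fst @^-1` [set (1:R)] : set (R * R)).
  by rewrite -[X in measurable X]setTI; apply: measurable_fst => //.
by [].
Qed.

Lemma step5 : (\int[pVm]_v Fv v =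
  \int[pVm]_(v in E1) Fv v + \int[pVm]_(v in ~` E1) Fv v)%E.
Proof.
rewrite -[in LHS](setUv E1) ge0_integral_setU //.
- exact: mE1.
- exact: measurableC mE1.
- by rewrite setUv; exact: mFv.
- by move=> v _; apply: integral_ge0 => w _; exact: G_ge0.
- exact/disj_setPCl.
Qed.

Definition phi2 := (\int[mu 2]_w (expR (r * Hs w))%:E)%E.

Lemma meHs : measurable_fun setT (fun w : Om R => (expR (r * Hs w))%:E).
Proof.
apply/measurable_EFinP; apply: measurableT_comp => //.
by apply: measurable_funM => //; exact: mHs.
Qed.

Lemma step6 : (\int[pVm]_(v in E1) Fv v =
  (\int[pVm]_(v in E1) (expR (r * v.2))%:E) * phi2)%E.
Proof.
transitivity (\int[pVm]_(v in E1) ((expR (r * v.2))%:E * phi2))%E.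
  apply: eq_integral => v; rewrite inE /E1 /= => v1.
  rewrite /Fv /phi2 -ge0_integralZl //; last exact: meHs.
  apply: eq_integral => w _; rewrite /G /= v1 mul1r mulrDr expRD EFinM //.
rewrite ge0_integralZr //.
- exact: mE1.
- apply: (measurable_funS measurableT) => //.
  apply/measurable_EFinP; apply: measurableT_comp => //.
  by apply: measurableT_comp => //; exact: measurable_snd.
- by apply: integral_ge0 => w _; rewrite lee_fin expR_ge0.
Qed.

Lemma step7 : (\int[pVm]_(v in E1) (expR (r * v.2))%:E =
  \int[P]_(t in [set t | (A t = 1)%R]) (expR (r * B t))%:E)%E.
Proof.
have mf : measurable_fun E1 (fun v : R * R => (expR (r * v.2))%:E).
  apply: (measurable_funS measurableT) => //.
  apply/measurable_EFinP; apply: measurableT_comp => //.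
  by apply: measurableT_comp => //; exact: measurable_snd.
exact: (@ge0_integral_pushforward _ _ _ _ _ V0 mV0 P E1 _ mE1 mf).
Qed.

Lemma step8 : phi2 = phi.
Proof.
rewrite /phi2 (eq_measure_integral (mu 1)); last first.
  by move=> Y mY _; exact/esym/mu12.
rewrite (@ge0_integral_distribution _ _ _ _ _ P (mfun_Sub (mPhi_in 1)) _ meHs); last first.
  by move=> w; rewrite lee_fin expR_ge0.
by apply: eq_integral => t _; rewrite /= X_Hs.
Qed.

Lemma mu_pos k : (0 < mu k [set: Om R])%E.
Proof. by rewrite probability_setT lte01. Qed.

Lemma Fv_gt0 v : (0 < Fv v)%E.
Proof.
apply: integral_gt0 => //.
- exact: (measurable_fun_pair2 v mG).
- by move=> w _; exact: G_gt0.
- exact: mu_pos.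
Qed.

Lemma step9 : (0 < pVm (~` E1))%E -> (0 < \int[pVm]_(v in ~` E1) Fv v)%E.
Proof.
move=> pos; apply: integral_gt0 => //.
- exact: measurableC mE1.
- exact: measurable_funS mFv.
- by move=> v _; exact: Fv_gt0.
Qed.


Lemma main_case : {ae P, forall t, cvgn (series (Xterm An Bn t))} ->
  (phi < +oo)%E -> (0 < pVm (~` E1))%E ->
  (\int[P]_(t in [set t | (A t = 1)%R]) (expR (r * B t))%:E < 1)%E.
Proof.
move=> cvae fin pos.
set c := (\int[P]_(t in _) _)%E.
set s := (\int[pVm]_(v in ~` E1) Fv v)%E.
have eq : phi = (c * phi + s)%E.
  by rewrite [LHS](step1 cvae) step2 step3 step4 step5 step6 step7 step8.
have s0 : (0 < s)%E := step9 pos.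
have phi0 : (0 <= phi)%E by apply: integral_ge0 => t _; rewrite lee_fin expR_ge0.
have phifin : phi \is a fin_num by rewrite ge0_fin_numE.
rewrite ltNge; apply/negP => c1.
have h1 : (phi < phi + s)%E by rewrite lteDl.
have h2 : (phi + s <= phi)%E.
  by rewrite [X in (_ <= X)%E]eq leeD // lee_pemull.
by have := lt_le_trans h1 h2; rewrite ltxx.
Qed.


Lemma ae_A1 : pV (~` E1) = 0%E -> {ae P, forall t, forall k, An k t = 1}.
Proof.
move=> h; apply: ae_foralln => k.
have mC : measurable (~` E1) by exact: measurableC mE1.
exists (V k @^-1` ~` E1); split.
- by rewrite -[X in measurable X]setTI; apply: mV.
- by rewrite -h; exact: (law k mC).
- by move=> t.
Qed.

Definition Se (e : R) : set (R * R) := [set v | `|v.2| <= e].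

Lemma mSe e : measurable (Se e).
Proof.
have : measurable ((fun v : R * R => `|v.2|) @^-1` `]-oo, e]).
  rewrite -[X in measurable X]setTI.
  have mf : measurable_fun setT (fun v : R * R => `|v.2|).
    by apply: measurableT_comp => //; exact: measurable_snd.
  by apply: mf => //; exact: measurable_itv.
by rewrite (_ : _ @^-1` _ = Se e) //; apply/seteqP; split => v /=; rewrite in_itv.
Qed.

Definition Em e m := \bigcap_i (V (m.+1 + i) @^-1` Se e).

Lemma mEm e m : measurable (Em e m).
Proof.
apply: bigcapT_measurable => i.
by rewrite -[X in measurable X]setTI; apply: mV => //; exact: mSe.
Qed.

Lemma Em_null e m : (pV (Se e) < 1)%E -> P (Em e m) = 0%E.
Proof.
move=> q1.
have pfin : pV (Se e) \is a fin_num.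
  rewrite ge0_fin_numE; last exact: measure_ge0.
  exact: lt_trans q1 (ltry 1).
set q := fine (pV (Se e)).
have qE : pV (Se e) = q%:E by rewrite fineK.
have q0 : 0 <= q by apply: fine_ge0; exact: measure_ge0.
have qlt1 : q < 1 by rewrite -lte_fin -qE.
have le n : (P (Em e m) <= (q ^+ n)%:E)%E.
  have -> : (q ^+ n)%:E = P (V 0 @^-1` setT `&` Phi m.+1 @^-1` cyl n (fun=> Se e)).
    rewrite indep_prod //; last by move=> _; exact: mSe.
    by rewrite pVT mul1e qE prodEFin prodr_const card_ord.
  apply: le_measure; rewrite ?inE.
  - exact: mEm.
  - apply: measurableI; first by rewrite preimage_setT.
    rewrite -[X in measurable X]setTI; apply: mPhi => //.
    by apply: Gcyl_measurable; exists n, (fun=> Se e); split => // _; exact: mSe.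
  - by move=> t Et; split => // i _; exact: Et.
apply/eqP; rewrite eq_le measure_ge0 andbT.
have Pfin : P (Em e m) \is a fin_num.
  rewrite ge0_fin_numE; last exact: measure_ge0.
  by apply: le_lt_trans (le 0%N) _; rewrite ltry.
rewrite -(fineK Pfin) lee_fin leNgt; apply/negP => y0.
have := cvg_expr (z := q); rewrite ger0_norm // => /(_ qlt1).
move/cvgrPdist_lt => /(_ _ y0) [N _ HN].
have := HN N (leqnn N); rewrite sub0r normrN ger0_norm ?exprn_ge0 //.
by rewrite ltNge -lee_fin (fineK Pfin) le.
Qed.


Lemma pV_le1 S : measurable S -> (pV S <= 1)%E.
Proof.
move=> mS; apply: probability_le1.
by rewrite -[X in measurable X]setTI; apply: mV0.
Qed.

Lemma pV_C S : measurable S -> pV (~` S) = (1 - pV S)%E.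
Proof.
move=> mS; rewrite /pV preimage_setC probability_setC //.
by rewrite -[X in measurable X]setTI; apply: mV0.
Qed.

Lemma exists_eps : (P (B @^-1` [set 0%R]) < 1)%E ->
  exists e : R, 0 < e /\ (pV (Se e) < 1)%E.
Proof.
move=> HB; apply: contrapT => /forallNP H.
have Hk k : pV (Se k.+1%:R^-1) = 1%E.
  apply/eqP; rewrite eq_le pV_le1 /=; last exact: mSe.
  rewrite leNgt; apply/negP => lt1.
  by apply: (H k.+1%:R^-1); split => //; rewrite invr_gt0.
have : {ae P, forall t, forall k : nat, `|B t| <= k.+1%:R^-1}.
  apply: ae_foralln => kk.
  have mC : measurable (~` Se kk.+1%:R^-1) by exact: measurableC (mSe _).
  exists (V0 @^-1` ~` Se kk.+1%:R^-1); split.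
  - by rewrite -[X in measurable X]setTI; apply: mV0.
  - transitivity (pV (~` Se kk.+1%:R^-1)); first by [].
    rewrite pV_C; last exact: mSe.
    by rewrite Hk subee.
  - by move=> t.
move=> [N [mN N0 sub]].
have : P (~` (B @^-1` [set 0%R])) = 0%E.
  apply: (subset_measure0 _ mN) => //.
    by apply: measurableC; rewrite -[X in measurable X]setTI; apply: mB.
  move=> t /= Bt0; apply: sub => /= Hall; apply: Bt0.
  apply/normr0_eq0/eqP; rewrite eq_le normr_ge0 andbT.
  rewrite leNgt; apply/negP => Bpos.
  have [k] := ltr_add_invr Bpos; rewrite add0r => kB.
  by have := Hall k; rewrite leNgt kB.
move=> h0.
have mB0 : measurable (B @^-1` [set 0%R]).
  by rewrite -[X in measurable X]setTI; apply: mB.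
have : P (B @^-1` [set 0%R]) = 1%E.
  rewrite -[B @^-1` _]setCK probability_setC; last exact: measurableC.
  by rewrite h0 sube0.
by move=> h; move: HB; rewrite h ltxx.
Qed.

Lemma bc_case : {ae P, forall t, cvgn (series (Xterm An Bn t))} ->
  pV (~` E1) = 0%E -> (P (B @^-1` [set 0%R]) < 1)%E -> False.
Proof.
move=> cvae hA HB.
have [e [e0 q1]] := exists_eps HB.
have aeE : {ae P, forall t, forall m, ~ (Em e m t)}.
  apply: ae_foralln => m; exists (Em e m); split.
  - exact: mEm.
  - exact: Em_null.
  - by move=> t /= /contrapT.
have : {ae P, forall t : T, False}.
  move: cvae (ae_A1 hA) aeE; apply: filterS3 => t cv h1 hE.
  have := cvg_series_cvg_0 cv; move/cvgrPdist_lt => /(_ e e0) [M _ HM].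
  apply: (hE M) => i _ /=.
  have := HM (M + i)%N (leq_addr i M).
  rewrite /Xterm /Pi big1 ?mul1r; last by move=> j _; rewrite h1.
  by rewrite sub0r normrN => /ltW.
move=> [N [mN N0 sub]].
have : P setT = 0%E.
  by apply: (subset_measure0 _ mN) => // t _; apply: sub => /=; case.
by rewrite probability_setT => -[] /eqP; rewrite oner_eq0.
Qed.


Lemma final : {ae P, forall t, cvgn (series (Xterm An Bn t))} ->
  (P (B @^-1` [set 0%R]) < 1)%E -> (phi < +oo)%E ->
  (\int[P]_(t in [set t | (A t = 1)%R]) (expR (r * B t))%:E < 1)%E.
Proof.
move=> cvae HB fin.
have [h|h] := eqVneq (pV (~` E1)) 0%E.
  by exfalso; exact: bc_case cvae h HB.
apply: main_case => //.
change (0 < pV (~` E1))%E.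
have : (0 <= pV (~` E1))%E by exact: measure_ge0.
by rewrite le_eqVlt eq_sym (negbTE h).
Qed.

End Main.

Unset Implicit Arguments.

Theorem mainTheorem5 (d : measure_display) (T : measurableType d) (R : realType)
  (P : probability T R) (A B : T -> R) (An Bn : nat -> T -> R) (r : R) :
  measurable_fun setT A -> measurable_fun setT B ->
  (forall n, measurable_fun setT (An n)) -> (forall n, measurable_fun setT (Bn n)) ->
  mutually_independent P (fun n t => (An n t, Bn n t)) ->
  (forall n, same_law P (fun t => (An n t, Bn n t)) (fun t => (A t, B t))) ->
  {ae P, forall t, cvgn (series (Xterm An Bn t))} ->
  P (A @^-1` [set 0%R]) = 0%E ->
  (P (B @^-1` [set 0%R]) < 1)%E ->
  (forall c : R, (P [set t | (B t + A t * c = c)%R] < 1)%E) ->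
  P (A @^-1` `]0%R, 1%R]%classic) = 1%E ->
  0 < r ->
  (\int[P]_t (expR (r * Xsum An Bn t))%:E < +oo)%E ->
  (\int[P]_(t in [set t | (A t = 1)%R]) (expR (r * B t))%:E < 1)%E.
Proof.
move=> mA mB mAn mBn indep law cvae _ HB _ _ _ fin.
exact: (final mA mB mAn mBn indep law cvae HB fin).
Qed.
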